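(* Let $H$ be an abelian group with an alternating $\mathbb{Z}$-bilinear form $\langle-,-\rangle$, let $z\in\ker\mu$, and let $p\ge 2$. Then the composition of the boundary map $\partial_p:C_p(\mathbb{Q}[H])_{(z)}\to C_{p-1}(\mathbb{Q}[H])_{(z)}$ with the quotient projection $C_{p-1}(\mathbb{Q}[H])_{(z)}\to\hat C_{p-1}(\mathbb{Q}[H])_{(z)}$ is the zero map.
   Context: $\mu:H\to\mathrm{Hom}_{\mathbb{Z}}(H,\mathbb{Z})$, $\mu(x)(y)=\langle x,y\rangle$. $\mathbb{Q}[H]$ is the $\mathbb{Q}$-vector space with basis symbols $[x]$, $x\in H$, with Lie bracket $[[x],[y]]=\langle x,y\rangle[x+y]$. Its Chevalley–Eilenberg chain complex is $C_p(\mathbb{Q}[H])=\bigwedge^p_{\mathbb{Q}}\mathbb{Q}[H]$ with $\partial(x_1\wedge\cdots\wedge x_p)=\sum_{i<j}(-1)^{i+j}[x_i,x_j]\wedge x_1\wedge\cdots\widehat{x_i}\cdots\widehat{x_j}\cdots\wedge x_p$. For $p>0$ and $w\in H$, $C_p(\mathbb{Q}[H])_{(w)}$ is the subspace spanned by $[u_1]\wedge\cdots\wedge[u_p]$ with $u_1+\cdots+u_p=w$; these form subcomplexes. Let $\hat I$ be the (two-sided) ideal of the exterior algebra $\bigwedge\mathbb{Q}[H]$ generated by all elements $[u+v]\wedge[x]-[u]\wedge[x+v]-[v]\wedge[x+u]$ with $u,v,x\in H$. Set $\hat I_{p,(w)}=\hat I\cap C_p(\mathbb{Q}[H])_{(w)}$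 and $\hat C_p(\mathbb{Q}[H])_{(w)}=C_p(\mathbb{Q}[H])_{(w)}/\hat I_{p,(w)}$. *)

(* Defs.v *)
From HB Require Import structures.
From mathcomp Require Import all_boot all_order all_algebra.
Set Implicit Arguments. Unset Strict Implicit. Unset Printing Implicit Defensive.
Import Order.TTheory GRing.Theory Num.Theory.
Local Open Scope ring_scope.

(* The tensor algebra T(Q[H]) of the Q-vector space Q[H] with basis symbols [x],
   x in H, has as basis the words (seq H); the word [:: x1; ...; xp] stands for
   [x1] (x) ... (x) [xp].  An element of T is represented by a finite formal
   combination  tel H := seq (rat * seq H); two representatives denote the same
   element iff they have the same coefficient function [coef]. *)
Definition tel (H : eqType) := seq (rat * seq H).

Definition coef (H : eqType) (t : tel H) (w : seq H) : rat :=
  \sum_(cw <- t | cw.2 == w) cw.1.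

Definition tscale (H : eqType) (c : rat) (t : tel H) : tel H :=
  [seq (c * cw.1, cw.2) | cw <- t].

Definition tmul (H : eqType) (s t : tel H) : tel H :=
  [seq (a.1 * b.1, a.2 ++ b.2) | a <- s, b <- t].

Definition mono (H : eqType) (w : seq H) : tel H := [:: (1, w)].

Definition in_ideal (H : eqType) (G : tel H -> Prop) (t : tel H) : Prop :=
  exists l : seq (rat * seq H * tel H * seq H),
    (forall e, e \in l -> G e.1.2) /\
    coef t =1 coef (flatten
      [seq tscale e.1.1.1 (tmul (tmul (mono e.1.1.2) e.1.2) (mono e.2)) | e <- l]).

(* Generators of the ideal J of T with T/J = exterior algebra of Q[H]
   ([x](x)[x] and [x](x)[y] + [y](x)[x]), together with the generators
   [u+v]^[x] - [u]^[x+v] - [v]^[x+u] of \hat I.  The ideal of T they generate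
   is the preimage of \hat I under T -> Lambda Q[H]. *)
Definition hatI_gen (H : zmodType) (g : tel H) : Prop :=
  (exists x : H, g = [:: (1, [:: x; x])]) \/
  (exists x y : H, g = [:: (1, [:: x; y]); (1, [:: y; x])]) \/
  (exists u v x : H,
      g = [:: (1, [:: u + v; x]); (-1, [:: u; x + v]); (-1, [:: v; x + u])]).

Definition in_hatI (H : zmodType) (t : tel H) : Prop := in_ideal (@hatI_gen H) t.

Definition in_Cpw (H : zmodType) (p : nat) (w : H) (t : tel H) : Prop :=
  forall u : seq H, coef t u != 0 -> size u = p /\ \sum_(a <- u) a = w.

Definition drop2 (H : zmodType) (w : seq H) (i j : nat) : seq H :=
  [seq nth 0 w k | k <- iota 0 (size w) & (k != i) && (k != j)].

(* Chevalley--Eilenberg boundary on a basis word (indices 0-based; the sign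
   (-1)^(i+j) is unchanged by the shift from 1-based indexing). *)
Definition bd_word (H : zmodType) (b : H -> H -> int) (w : seq H) : tel H :=
  flatten [seq [seq (((-1) ^+ (i + j) * (b (nth 0 w i) (nth 0 w j))%:~R)%R,
                      (nth 0 w i + nth 0 w j) :: drop2 w i j)
               | j <- iota 0 (size w) & (i < j)%N]
          | i <- iota 0 (size w)].

Definition bd (H : zmodType) (b : H -> H -> int) (t : tel H) : tel H :=
  flatten [seq tscale cw.1 (bd_word b cw.2) | cw <- t].

(* Main.v *)
Require Import Defs.
From HB Require Import structures.
From mathcomp Require Import all_boot all_order all_algebra.
From mathcomp Require Import ring zify lra.
Import Order.TTheory GRing.Theory Num.Theory.
Local Open Scope ring_scope.
Set Implicit Arguments. Unset Strict Implicit.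

Section Coef.
Variable H : zmodType.
Implicit Types (s t g : tel H) (w a bb : seq H) (c : rat).

Lemma coef_nil w : coef ([::] : tel H) w = 0.
Proof. by rewrite /coef big_nil. Qed.

Lemma coef_cons c (u : seq H) t w : coef ((c, u) :: t) w = c * (u == w)%:R + coef t w.
Proof. by rewrite /coef big_cons /=; case: (u == w); rewrite ?mulr1 ?mulr0 ?add0r. Qed.

Lemma coef_cat s t w : coef (s ++ t) w = coef s w + coef t w.
Proof. by rewrite /coef big_cat. Qed.

Lemma coef_scale c t w : coef (tscale c t) w = c * coef t w.
Proof. by rewrite /coef /tscale big_map mulr_sumr. Qed.

Lemma coef_flatten (L : seq (tel H)) w : coef (flatten L) w = \sum_(x <- L) coef x w.
Proof. elim: L => [|x L IH]; first by rewrite big_nil coef_nil.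
by rewrite /= coef_cat big_cons IH. Qed.

Lemma coef_map (X : Type) (f : X -> rat) (g : X -> seq H) (s : seq X) w :
  coef [seq (f e, g e) | e <- s] w = \sum_(e <- s) f e * (g e == w)%:R.
Proof. elim: s => [|x0 s IH]; first by rewrite big_nil coef_nil.
by rewrite /= coef_cons big_cons IH. Qed.

Lemma I_coef s t : coef s =1 coef t -> in_hatI t -> in_hatI s.
Proof. move=> e [l [hl hc]]; exists l; split=> // w; by rewrite e hc. Qed.

Lemma I_nil : in_hatI ([::] : tel H).
Proof. by exists [::]; split. Qed.

Lemma I_cat s t : in_hatI s -> in_hatI t -> in_hatI (s ++ t).
Proof.
move=> [l1 [h1 c1]] [l2 [h2 c2]]; exists (l1 ++ l2); split.
  by move=> e; rewrite mem_cat => /orP [] ?; [apply: h1|apply: h2].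
by move=> w; rewrite map_cat flatten_cat !coef_cat c1 c2.
Qed.

Lemma I_scale c t : in_hatI t -> in_hatI (tscale c t).
Proof.
move=> [l [h1 c1]].
exists [seq (c * e.1.1.1, e.1.1.2, e.1.2, e.2) | e <- l]; split.
  by move=> e /mapP [e' he' ->] /=; apply: h1.
move=> w; rewrite coef_scale c1 !coef_flatten !big_map mulr_sumr.
by apply: eq_bigr => e _; rewrite /= !coef_scale mulrA.
Qed.

Lemma I_flatten (L : seq (tel H)) : (forall x, x \in L -> in_hatI x) -> in_hatI (flatten L).
Proof.
elim: L => [|x L IH] h; first exact: I_nil.
apply: I_cat; first by apply: h; rewrite inE eqxx.
by apply: IH => y hy; apply: h; rewrite inE hy orbT.
Qed.

Lemma tmul_mono a g bb :
  @tmul H (tmul (mono a) g) (mono bb) = [seq (1 * cw.1 * 1, (a ++ cw.2) ++ bb) | cw <- g].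
Proof. rewrite /tmul /mono /= cats0; elim: g => //= x g ->; done. Qed.

Lemma I_gen a g bb : hatI_gen g -> in_hatI [seq (cw.1, a ++ cw.2 ++ bb) | cw <- g].
Proof.
move=> hg; exists [:: (1, a, g, bb)]; split.
  by move=> e; rewrite inE => /eqP ->.
move=> w; rewrite /= cats0 coef_scale tmul_mono mul1r.
rewrite !coef_map; apply: eq_bigr => cw _; by rewrite mul1r mulr1 catA.
Qed.

Lemma I_G1 a (x : H) bb : in_hatI [:: (1, a ++ x :: x :: bb)].
Proof. have := @I_gen a [:: (1, [:: x; x])] bb; apply; by left; exists x. Qed.

Lemma I_swap c a (x y : H) bb : in_hatI [:: (c, a ++ x :: y :: bb); (c, a ++ y :: x :: bb)].
Proof.
have h := @I_gen a [:: (1, [:: x; y]); (1, [:: y; x])] bb.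
have := I_scale c (h _); rewrite /tscale /= !mulr1; apply.
by right; left; exists x, y.
Qed.

Lemma I_G3 a (u v x : H) bb : in_hatI [:: (1, a ++ (u + v) :: x :: bb);
   (-1, a ++ u :: (x + v) :: bb); (-1, a ++ v :: (x + u) :: bb)].
Proof.
have h := @I_gen a [:: (1, [:: u + v; x]); (-1, [:: u; x + v]); (-1, [:: v; x + u])] bb.
apply: h; by right; right; exists u, v, x.
Qed.

Lemma I_move (l1 : seq H) c a (x : H) bb :
  in_hatI [:: (c, a ++ l1 ++ x :: bb); (- c * (-1) ^+ size l1, a ++ x :: l1 ++ bb)].
Proof.
elim: l1 c a => [|y l1 IH] c a.
  apply: (I_coef (t := [::])); last exact: I_nil.
  by move=> w; rewrite !coef_cons coef_nil /=; ring.
have h1 := IH c (a ++ [:: y]).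
have h2 := I_swap (c * (-1) ^+ size l1) a y x (l1 ++ bb).
apply: I_coef (I_cat h1 h2) => w.
rewrite !coef_cat !coef_cons coef_nil -!catA /= exprS; ring.
Qed.

End Coef.
Local Open Scope nat_scope.

Lemma count_pred1_iota (x a m : nat) : count (pred1 x) (iota a m) = (a <= x < a + m).
Proof. by rewrite (count_uniq_mem x (iota_uniq a m)) mem_iota. Qed.

Lemma count_neq2 (a b m : nat) : a != b -> a < m -> b < m ->
  count (fun k => (k != a) && (k != b)) (iota 0 m) = m - 2.
Proof.
move=> ab am bm.
have := count_predC (fun k => (k != a) && (k != b)) (iota 0 m).
have := count_predUI (pred1 a) (pred1 b) (iota 0 m).
rewrite size_iota !count_pred1_iota.
have -> : count (predC (fun k => (k != a) && (k != b))) (iota 0 m) =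
   count (predU (pred1 a) (pred1 b)) (iota 0 m).
  by apply: eq_count => k /=; rewrite negb_and !negbK.
have -> : count (predI (pred1 a) (pred1 b)) (iota 0 m) = 0.
  rewrite (@eq_count _ _ pred0) ?count_pred0 // => k /=.
  by apply/negP => /andP [/eqP -> /eqP e]; move: ab; rewrite e eqxx.
rewrite am bm /=; lia.
Qed.

Lemma count_neq1 (a m : nat) : a < m ->
  count (fun k => k != a) (iota 0 m) = m - 1.
Proof.
move=> am; have := count_predC (pred1 a) (iota 0 m).
rewrite size_iota count_pred1_iota am /=.
have -> : count (predC (pred1 a)) (iota 0 m) = count (fun k => k != a) (iota 0 m) by [].
lia.
Qed.

Lemma iota_split (a m len : nat) : a <= m < a + len ->
  iota a len = iota a (m - a) ++ m :: iota m.+1 (a + len - m.+1).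
Proof.
move=> /andP [h1 h2].
have e : len = (m - a) + (a + len - m.+1).+1 by lia.
by rewrite {1}e iotaD /= subnKC.
Qed.

Lemma filter_map_split (T : Type) (f : nat -> T) (P : pred nat) s1 m s2 : P m ->
  [seq f k | k <- s1 ++ m :: s2 & P k] =
  [seq f k | k <- s1 & P k] ++ f m :: [seq f k | k <- s2 & P k].
Proof. by move=> hm; rewrite filter_cat map_cat /= hm. Qed.

Section Words.
Variable H : zmodType.
Variable w : seq H.
Local Notation n := (size w).

Definition Dw (i j : nat) : seq H :=
  [seq nth 0%R w k | k <- iota 0 n & (k != 0) && (k != i) && (k != j)].

Lemma E1 i j : 0 < i -> 0 < j -> 0 < n -> drop2 w i j = nth 0%R w 0 :: Dw i j.
Proof.
move=> hi hj hn; rewrite /drop2 /Dw.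
case: n hn => [//|n'] _ /=.
have -> : (0 != i) && (0 != j) by rewrite !(eq_sym 0) -!lt0n hi hj.
congr (_ :: _); congr map; apply: eq_in_filter => k; rewrite mem_iota => /andP [k1 _].
by rewrite -lt0n k1.
Qed.

Lemma E2 i j : 0 < i < j -> j < n -> exists l1 l2,
  drop2 w 0 j = l1 ++ nth 0%R w i :: l2 /\ l1 ++ l2 = Dw i j /\ size l1 = i.-1.
Proof.
move=> /andP [hi hij] hj.
have sp : 0 <= i < 0 + n by rewrite add0n (ltn_trans hij hj).
rewrite /drop2 /Dw (iota_split sp) filter_map_split; last first.
  by rewrite -lt0n hi (ltn_eqF hij).
eexists; eexists; split; first reflexivity.
rewrite filter_cat map_cat /= eqxx andbF /=; split.
  congr (_ ++ _); congr map; apply: eq_in_filter => k; rewrite mem_iota => /andP [k1 k2].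
    by rewrite subn0 in k2; rewrite (ltn_eqF k2) /= andbT.
  by rewrite (gtn_eqF k1) /= andbT.
rewrite size_map size_filter subn0.
rewrite (@eq_in_count _ _ (fun k => k != 0)); first by rewrite count_neq1 // subn1.
by move=> k; rewrite mem_iota add0n => /andP [_ k2]; rewrite (ltn_eqF (ltn_trans k2 hij)) andbT.
Qed.
Lemma E3 i j : 0 < i < j -> j < n -> exists l1 l2,
  drop2 w 0 i = l1 ++ nth 0%R w j :: l2 /\ l1 ++ l2 = Dw i j /\ size l1 = j - 2.
Proof.
move=> /andP [hi hij] hj.
have sp : 0 <= j < 0 + n by rewrite add0n hj.
rewrite /drop2 /Dw (iota_split sp) filter_map_split; last first.
  by rewrite -lt0n (ltn_trans hi hij) (gtn_eqF hij).
eexists; eexists; split; first reflexivity.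
rewrite filter_cat map_cat /= eqxx andbF /=; split.
  congr (_ ++ _); congr map; apply: eq_in_filter => k; rewrite mem_iota => /andP [k1 k2].
    by rewrite subn0 in k2; rewrite (ltn_eqF k2) /= andbT.
  by rewrite (gtn_eqF k1) andbT.
rewrite size_map size_filter subn0 count_neq2 //.
  by rewrite eq_sym -lt0n.
exact: ltn_trans hi hij.
Qed.

Lemma size_drop2 i j : i < j -> j < n -> size (drop2 w i j) = n - 2.
Proof.
move=> hij hj; rewrite /drop2 size_map size_filter count_neq2 //.
  by rewrite (ltn_eqF hij).
exact: ltn_trans hij hj.
Qed.

End Words.

Local Open Scope ring_scope.
Lemma sq_sign (k : nat) : (-1) ^+ k * (-1) ^+ k = 1 :> rat.
Proof. by rewrite -exprD -signr_odd oddD addbb. Qed.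

Section Key.
Variable H : zmodType.
Variable w : seq H.

Definition Fw (i j : nat) : seq H := (nth 0 w i + nth 0 w j) :: drop2 w i j.

Lemma key i j : (0 < i < j)%N -> (j < size w)%N ->
  in_hatI [:: (1, Fw i j); (- (-1) ^+ i, Fw 0 j); ((-1) ^+ j, Fw 0 i)].
Proof.
case: i => [|i']; first by [].
case: j => [|[|j']]; [by []|by case/andP => _; rewrite ltnS leqn0|].
move=> hij hj.
have [l1 [l2 [e2 [d2 s2]]]] := E2 hij hj.
have [m1 [m2 [e3 [d3 s3]]]] := E3 hij hj.
case/andP: hij => hi hij.
have e1 := E1 hi (ltn_trans hi hij) (ltn_trans (ltn_trans hi hij) hj).
set D := Dw w i'.+1 j'.+2 in e1 d2 d3.
set w0 := nth 0 w 0 in e1 *.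
set wi := nth 0 w i'.+1 in e2 *.
set wj := nth 0 w j'.+2 in e3 *.
have X1 := I_G3 [::] wi wj w0 D.
have X2 := I_swap 1 [::] wi (w0 + wj) D.
have X3 := I_swap 1 [::] wj (w0 + wi) D.
have X4 := I_move l1 ((-1) ^+ i') [:: w0 + wj] wi l2.
have X5 := I_move m1 ((-1) ^+ j') [:: w0 + wi] wj m2.
rewrite s2 mulNr sq_sign /= d2 in X4.
rewrite s3 !subSS subn0 mulNr sq_sign d3 in X5.
apply: I_coef (I_cat X1 (I_cat X2 (I_cat X3 (I_cat X4 X5)))) => u.
rewrite /Fw e1 e2 e3 /= !coef_cons !coef_nil.
rewrite !exprS; ring.
Qed.
End Key.

Lemma antisym_sum (s : seq nat) (beta : nat -> nat -> rat) (rho : nat -> rat) :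
  (forall i j, beta i j = - beta j i) ->
  (forall j, \sum_(i <- s) beta i j = 0) ->
  \sum_(i <- s) \sum_(j <- s | (i < j)%N) beta i j * (rho j - rho i) = 0.
Proof.
move=> anti col.
set S := fun i j => if (i < j)%N then beta i j * (rho j - rho i) else 0.
have eX : \sum_(i <- s) \sum_(j <- s | (i < j)%N) beta i j * (rho j - rho i)
   = \sum_(i <- s) \sum_(j <- s) S i j.
  by apply: eq_bigr => i _; rewrite big_mkcond.
have eS : forall i j, S i j + S j i = beta i j * rho j - beta i j * rho i.
  move=> i j; rewrite /S; case: (ltngtP i j) => h.
  - by rewrite addr0 mulrBr.
  - by rewrite add0r (anti j i) mulrBr; ring.
  - by rewrite h; ring.
have row : forall i, \sum_(j <- s) beta i j = 0.
  move=> i; rewrite (eq_bigr (fun j => - beta j i)); last by move=> j _; rewrite anti.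
  by rewrite sumrN col oppr0.
rewrite eX.
have : \sum_(i <- s) \sum_(j <- s) S i j + \sum_(i <- s) \sum_(j <- s) S i j = 0.
  rewrite {2}exchange_big -big_split /=.
  rewrite (eq_bigr (fun i => \sum_(j <- s) (beta i j * rho j - beta i j * rho i))); last first.
    by move=> i _; rewrite -big_split; apply: eq_bigr => j _; exact: eS.
  rewrite (eq_bigr (fun i => \sum_(j <- s) beta i j * rho j - rho i * \sum_(j <- s) beta i j)); last first.
    move=> i _; rewrite sumrB mulr_sumr; congr (_ - _); apply: eq_bigr => j _; exact: mulrC.
  rewrite sumrB exchange_big /=.
  rewrite (eq_bigr (fun j => 0)); last by move=> j _; rewrite -mulr_suml col mul0r.
  rewrite [X in _ - X](eq_bigr (fun j => 0)); last by move=> j _; rewrite row mulr0.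
  by rewrite big1 // subrr.
move=> h; lra.
Qed.

Section Main.
Variable H : zmodType.
Variable b : H -> H -> int.
Hypothesis b_addl : forall x x' y : H, b (x + x') y = b x y + b x' y.
Hypothesis b_addr : forall x y y' : H, b x (y + y') = b x y + b x y'.
Hypothesis b_alt : forall x : H, b x x = 0.

Lemma b_anti x y : b x y = - b y x.
Proof.
have := b_alt (x + y); rewrite b_addl !b_addr !b_alt => h.
apply/eqP; rewrite -subr_eq0 opprK; apply/eqP; move: h; rewrite add0r addr0 addrC => ->; done.
Qed.

Lemma b_0l y : b 0 y = 0.
Proof. by apply: (addrI (b 0 y)); rewrite addr0 -b_addl addr0. Qed.

Lemma b_suml (X : Type) (s : seq X) (f : X -> H) y :
  b (\sum_(x <- s) f x) y = \sum_(x <- s) b (f x) y.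
Proof.
elim: s => [|x s IH]; first by rewrite !big_nil b_0l.
by rewrite !big_cons b_addl IH.
Qed.

Variable w : seq H.
Hypothesis hw : forall y, b (\sum_(x <- w) x) y = 0.

Definition rr (m : nat) : tel H := if m == 0%N then [::] else [:: ((-1) ^+ m, Fw w 0 m)].
Definition AA (i j : nat) : tel H :=
  [:: (1, Fw w i j)] ++ tscale (- (-1) ^+ (i + j)) (rr j) ++ tscale ((-1) ^+ (i + j)) (rr i).

Lemma sign_cases (k : nat) : (-1) ^+ k = 1 :> rat \/ (-1) ^+ k = -1 :> rat.
Proof. by rewrite -signr_odd; case: (odd k); [right; rewrite expr1|left; rewrite expr0]. Qed.

Lemma AA_I i j : (i < j)%N -> (j < size w)%N -> in_hatI (AA i j).
Proof.
move=> hij hj; rewrite /AA /rr.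
case: i hij => [|i'] hij.
  rewrite (gtn_eqF hij) eqxx.
  apply: (I_coef (t := [::])); last exact: I_nil.
  move=> u; rewrite !coef_cat !coef_nil coef_scale !coef_cons coef_nil add0n.
  by case: (sign_cases j) => ->; ring.
have := key (i := i'.+1) (j := j) hij hj.
rewrite (gtn_eqF (ltn_trans (ltn0Sn i') hij)) (gtn_eqF (ltn0Sn i')).
apply: I_coef => u; rewrite !coef_cat coef_scale coef_scale !coef_cons !coef_nil exprD.
by case: (sign_cases i'.+1) => ->; case: (sign_cases j) => ->; ring.
Qed.

Definition cc (i j : nat) : rat := (-1) ^+ (i + j) * (b (nth 0 w i) (nth 0 w j))%:~R.
Definition Cl : tel H := flatten [seq flatten [seq tscale (cc i j) (AA i j)
   | j <- iota 0 (size w) & (i < j)%N] | i <- iota 0 (size w)].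

Lemma Cl_I : in_hatI Cl.
Proof.
apply: I_flatten => x /mapP [i hi ->]; apply: I_flatten => y /mapP [j hj ->].
apply: I_scale; move: hj; rewrite mem_filter mem_iota add0n => /andP [hij /andP [_ hj]].
exact: AA_I.
Qed.

Lemma coef_AA i j u : coef (AA i j) u =
  (Fw w i j == u)%:R - (-1) ^+ (i + j) * coef (rr j) u + (-1) ^+ (i + j) * coef (rr i) u.
Proof. by rewrite /AA /= coef_cons !coef_cat !coef_scale mul1r; ring. Qed.

Lemma bdw_I : in_hatI (bd_word b w).
Proof.
apply: I_coef Cl_I => u.
rewrite /bd_word /Cl !coef_flatten !big_map.
apply/eqP; rewrite -subr_eq0 -sumrB; apply/eqP.
rewrite (eq_bigr (fun i => \sum_(j <- iota 0 (size w) | (i < j)%N)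
     (b (nth 0 w i) (nth 0 w j))%:~R * (coef (rr j) u - coef (rr i) u))); last first.
  move=> i _; rewrite coef_flatten big_map coef_map !big_filter -sumrB.
  apply: eq_bigr => j _; rewrite coef_scale coef_AA /cc /Fw -signr_odd.
  by case: (odd (i + j)) => /=; ring.
apply: antisym_sum => [i j|j].
  by rewrite b_anti intrN.
rewrite -(big_morph (fun x : int => x%:~R : rat) (@intrD _) (mulr0z 1)).
rewrite -b_suml.
have -> : \sum_(i <- iota 0 (size w)) nth 0 w i = \sum_(x <- w) x.
  by rewrite [RHS](big_nth 0) /index_iota subn0.
by rewrite hw.
Qed.

End Main.

Section Group.
Variable H : zmodType.

Lemma group_coef (f : seq H -> tel H) (t : tel H) u :
  coef (flatten [seq tscale cw.1 (f cw.2) | cw <- t]) u =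
  \sum_(w <- undup (map snd t)) coef t w * coef (f w) u.
Proof.
rewrite coef_flatten big_map.
rewrite (eq_bigr (fun w => \sum_(cw <- t) (if cw.2 == w then cw.1 * coef (f w) u else 0))); last first.
  by move=> w _; rewrite /coef mulr_suml big_mkcond.
rewrite exchange_big /=; rewrite big_seq [RHS]big_seq; apply: eq_bigr => cw hcw.
rewrite coef_scale.
have hin : cw.2 \in undup (map snd t) by rewrite mem_undup; apply/mapP; exists cw.
rewrite (big_rem _ hin) eqxx /=.
rewrite big_seq big1 ?addr0 // => w hw.
have := undup_uniq (map snd t); rewrite (rem_filter _ (undup_uniq _)) in hw.
by move=> _; move: hw; rewrite mem_filter => /andP [/= /negbTE]; rewrite eq_sym => ->.
Qed.

Lemma sum_drop2 (w : seq H) i j : (i < j)%N -> (j < size w)%N ->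
  nth 0 w i + nth 0 w j + \sum_(x <- drop2 w i j) x = \sum_(x <- w) x.
Proof.
move=> hij hj.
rewrite [RHS](big_nth 0) /index_iota subn0.
have hi : i \in iota 0 (size w) by rewrite mem_iota add0n (ltn_trans hij hj).
have hj' : j \in [seq k <- iota 0 (size w) | k != i].
  by rewrite mem_filter mem_iota add0n hj (gtn_eqF hij).
rewrite (bigD1_seq i hi (iota_uniq _ _)) /= -[in RHS]big_filter.
rewrite (bigD1_seq j hj' (filter_uniq _ (iota_uniq _ _))) /= big_filter_cond.
by rewrite /drop2 big_map big_filter addrA.
Qed.

End Group.

Unset Implicit Arguments.
Set Strict Implicit.

Theorem proposition3p1 (H : zmodType) (b : H -> H -> int)
  (b_addl : forall x x' y : H, b (x + x') y = b x y + b x' y)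
  (b_addr : forall x y y' : H, b x (y + y') = b x y + b x y')
  (b_alt : forall x : H, b x x = 0)
  (z : H) (hz : forall y : H, b z y = 0)
  (p : nat) (hp : (2 <= p)%N)
  (t : tel H) (ht : in_Cpw p z t) :
  in_hatI (bd b t) /\ in_Cpw p.-1 z (bd b t).
Proof.
split.
  pose R w := if coef t w == 0 then [::] else bd_word b w.
  have IR : in_hatI (flatten [seq tscale cw.1 (R cw.2) | cw <- t]).
    apply: I_flatten => x /mapP [cw _ ->]; apply: I_scale; rewrite /R.
    case: eqP => [_|/eqP h]; first exact: I_nil.
    have [_ hs] := ht _ h.
    apply: bdw_I => // y; by rewrite hs.
  apply: I_coef IR => u; rewrite /bd !group_coef; apply: eq_bigr => w _.
  by rewrite /R; case: eqP => [->|]; rewrite ?mul0r.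
move=> u; rewrite /bd group_coef => hnz.
have [w hw hterm] : exists2 w, w \in undup (map snd t) & coef t w * coef (bd_word b w) u != 0.
  case: (boolP (has (fun w => coef t w * coef (bd_word b w) u != 0) (undup (map snd t)))).
    by move=> /hasP [w hw h]; exists w.
  move=> /hasPn hall; move: hnz; rewrite big1_seq ?eqxx // => w /andP [_ hw].
  by have := hall w hw; rewrite negbK => /eqP.
move: hterm; rewrite mulf_eq0 negb_or => /andP [h1 h2].
have [hsz hsum] := ht w h1.
have : has (fun cw => cw.2 == u) (bd_word b w).
  apply/negPn/negP => hn; move: h2; by rewrite /coef big_hasC // eqxx.
move=> /hasP [cw /flattenP [l /mapP [i hi ->] hcw] /eqP <-].
move: hcw => /mapP [j hj ->] /=.
move: hj; rewrite mem_filter mem_iota add0n => /andP [hij /andP [_ hj]].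
split.
  rewrite size_drop2 // hsz; lia.
by rewrite big_cons -hsum -(sum_drop2 hij hj).
Qed.
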